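(* For every graph $G$, $\mathrm{ltp}(G)-1\le \mathrm{tw}(G)\le 2\,\mathrm{ltp}(G)-1$.
   Context: For a tree $T$ and integer $k$, $T[K_k]$ denotes the lexicographic product: the graph obtained from $T$ by replacing each vertex by a copy of $K_k$ and each edge by a copy of $K_{k,k}$ between the corresponding copies. The lexicographic tree product number $\mathrm{ltp}(G)$ is the minimum integer $k$ such that $G$ is a minor of $T[K_k]$ for some tree $T$. The treewidth $\mathrm{tw}(G)$ is the minimum over tree decompositions of $G$ (a tree with bags $B_x\subseteq V(G)$ such that each vertex's bags form a non-empty subtree and each edge lies in some bag) of the maximum bag size minus $1$. *)

(* Defs.v *)
From mathcomp Require Import all_boot all_order all_algebra.
Set Implicit Arguments. Unset Strict Implicit. Unset Printing Implicit Defensive.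

Definition simple_graph (V : finType) (e : rel V) : Prop :=
  symmetric e /\ irreflexive e.

Definition restrict_rel (V : finType) (e : rel V) (S : {set V}) : rel V :=
  [rel x y | [&& e x y, x \in S & y \in S]].

(* S induces a connected subgraph of (V,e) (the empty set is allowed here;
   non-emptiness is required separately where needed). *)
Definition connected_in (V : finType) (e : rel V) (S : {set V}) : Prop :=
  forall x y, x \in S -> y \in S -> connect (restrict_rel e S) x y.

Definition acyclic (X : finType) (f : rel X) : Prop :=
  forall s : seq X, uniq s -> 3 <= size s -> ~~ cycle f s.

Definition is_tree (X : finType) (f : rel X) : Prop :=
  [/\ simple_graph f, 0 < #|X|, connected_in f setT & acyclic f].

Definition tree_decomposition (V : finType) (e : rel V)
    (X : finType) (f : rel X) (B : X -> {set V}) : Prop :=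
  [/\ is_tree f,
      (forall v : V, [set x | v \in B x] != set0 /\
                     connected_in f [set x | v \in B x])
    & (forall u v : V, e u v -> exists x : X, (u \in B x) && (v \in B x))].

Definition has_td_bagsize (V : finType) (e : rel V) (k : nat) : Prop :=
  exists (X : finType) (f : rel X) (B : X -> {set V}),
    tree_decomposition e f B /\ forall x : X, #|B x| <= k.

Definition treewidth_is (V : finType) (e : rel V) (t : int) : Prop :=
  exists k : nat, t = (k%:Z - 1)%R /\ has_td_bagsize e k /\
    forall k', has_td_bagsize e k' -> k <= k'.

Definition is_minor (V : finType) (e : rel V) (W : finType) (h : rel W) : Prop :=
  exists beta : V -> {set W},
    [/\ (forall v, beta v != set0),
        (forall v, connected_in h (beta v)),
        (forall u v, u != v -> [disjoint beta u & beta v])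
      & (forall u v, e u v ->
           exists x y, [&& x \in beta u, y \in beta v & h x y])].

Definition lex_prod (X : finType) (f : rel X) (k : nat) : rel (prod X 'I_k) :=
  [rel p q | ((p.1 == q.1) && (p.2 != q.2)) || f p.1 q.1].

Definition has_ltp (V : finType) (e : rel V) (k : nat) : Prop :=
  exists (X : finType) (f : rel X), is_tree f /\ is_minor e (@lex_prod X f k).

Definition ltp_is (V : finType) (e : rel V) (l : nat) : Prop :=
  has_ltp e l /\ forall k, has_ltp e k -> l <= k.

(* Main.v *)
Require Import Defs.
From mathcomp Require Import all_boot all_order all_algebra.
From mathcomp Require Import zify.
From Stdlib Require Import Classical.
Import Order.TTheory GRing.Theory Num.Theory.
Set Implicit Arguments. Unset Strict Implicit. Unset Printing Implicit Defensive.

Definition del (X : finType) (f : rel X) (a b : X) : rel X :=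
  [rel x y | f x y && ~~ (((x == a) && (y == b)) || ((x == b) && (y == a)))].

Lemma connect_map (T U : finType) (e : rel T) (e' : rel U) (h : T -> U) :
  (forall a b, e a b -> connect e' (h a) (h b)) ->
  forall a b, connect e a b -> connect e' (h a) (h b).
Proof.
move=> H a b /connectP [p pth ->]; elim: p a pth => [|c p IH] a /=.
  by move=> _; exact: connect0.
by case/andP=> eac pc; apply: connect_trans (H _ _ eac) (IH _ pc).
Qed.

Section Tree.
Variables (X : finType) (f : rel X).
Hypotheses (fs : symmetric f) (fi : irreflexive f) (fa : acyclic f).

Lemma del_sym a b : symmetric (del f a b).
Proof.
move=> x y; rewrite /del /= fs; congr andb.
by case: (x == a); case: (x == b); case: (y == a); case: (y == b).
Qed.

Lemma del_swap a b : del f b a =2 del f a b.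
Proof.
move=> x y; rewrite /del /=; congr andb.
by case: (x == a); case: (x == b); case: (y == a); case: (y == b).
Qed.

Lemma f_neq a b : f a b -> a != b.
Proof. by apply: contraTneq => ->; rewrite fi. Qed.

Lemma cut a b : f a b -> ~~ connect (del f a b) a b.
Proof.
move=> fab; apply/negP => /connectP [p pth lst].
move: lst; case: (shortenP pth) => p' pth' uq _ lst.
case: p' pth' uq lst => [|c [|d q]] /=.
- by move=> _ _ eba; move: (f_neq fab); rewrite eba eqxx.
- by move=> H1 _ H3; move: H1; rewrite -H3 /del /= !eqxx /= andbF.
- move=> pth' uq lst.
  have /negP := @fa [:: a, c, d & q] uq isT; apply.
  have sub : subrel (del f a b) f by move=> x y /andP[].
  case/and3P: pth' => h1 h2 h3.
  by rewrite /= rcons_path (sub _ _ h1) (sub _ _ h2) (sub_path sub h3) -lst (fs b) fab.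
Qed.

Lemma rootside a b s p : path f s p -> last s p = a ->
  connect (del f a b) s a \/ connect (del f a b) s b.
Proof.
elim: p s => [|c p IH] s /=.
  by move=> _ ->; left; exact: connect0.
case/andP=> fsc pc lc.
case sa: (s == a); first by move/eqP: sa => ->; left; exact: connect0.
case sb: (s == b); first by move/eqP: sb => ->; right; exact: connect0.
have gsc : del f a b s c by rewrite /del /= fsc sa sb.
by case: (IH c pc lc) => H; [left|right]; apply: connect_trans (connect1 gsc) H.
Qed.

Lemma avoid x y y' r s p : y != y' ->
  path (del f x y') s p -> last s p = r ->
  connect (del f x y') s x \/ connect (del f x y) s r.
Proof.
move=> nyy'; elim: p s => [|c p IH] s /=.
  by move=> _ ->; right; exact: connect0.
case/andP=> H pc lc.
case: (IH c pc lc) => IHc.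
  by left; apply: connect_trans (connect1 H) IHc.
case sx: (s == x); first by move/eqP: sx => ->; left; exact: connect0.
case cx: (c == x); first by move/eqP: cx => cx; left; have := connect1 H; rewrite cx.
right; apply: connect_trans IHc; apply: connect1.
by move: H => /andP[fsc _]; rewrite /del /= fsc sx cx !andbF.
Qed.

Variable r : X.

Definition par (x : X) : option X :=
  [pick y | f x y && connect (del f x y) y r].

Lemma par_edge x y : par x = Some y -> f x y.
Proof. by rewrite /par; case: pickP => // z /andP[fz _] [<-]. Qed.

Lemma par_uniq x y y' : f x y -> f x y' ->
  connect (del f x y) y r -> connect (del f x y') y' r -> y = y'.
Proof.
move=> fxy fxy' cy cy'; case: (eqVneq y y') => // neq; exfalso.
move/connectP: cy' => [p pth lst].
case: (avoid neq pth (esym lst)) => H.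
  by move: (cut fxy'); rewrite (sym_connect_sym (@del_sym x y')) H.
move: (cut fxy) => /negP; apply.
have e1 : del f x y x y'.
  by rewrite /del /= fxy' eqxx eq_sym (negbTE neq) (negbTE (f_neq fxy)).
apply: connect_trans (connect1 e1) _; apply: connect_trans H _.
by rewrite (sym_connect_sym (@del_sym x y)).
Qed.

Hypothesis conn : forall x, connect f r x.

Lemma edge_par a b : f a b -> par a = Some b \/ par b = Some a.
Proof.
move=> fab; move/connectP: (conn a) => [p pth lst].
case: (rootside b pth (esym lst)) => H.
- right; rewrite /par; case: pickP => [y /andP[fby cy] | none].
  + congr Some; apply: (par_uniq fby) => //; first by rewrite fs.
    by rewrite (eq_connect (del_swap a b)) (sym_connect_sym (@del_sym a b)).
  + by move: (none a); rewrite fs fab /= (eq_connect (del_swap a b))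
      (sym_connect_sym (@del_sym a b)) H.
- left; rewrite /par; case: pickP => [y /andP[fay cy] | none].
  + congr Some; apply: (par_uniq fay) => //.
    by rewrite (sym_connect_sym (@del_sym a b)).
  + by move: (none b); rewrite fab /= (sym_connect_sym (@del_sym a b)) H.
Qed.

End Tree.

Lemma dir2 (V : finType) (e : rel V) (Ge : simple_graph e) k :
  has_td_bagsize e k -> has_ltp e k.
Proof.
case=> X [f [B [[tr vb eb] sz]]].
exists X, f; split => //.
pose idx (x : X) (v : V) := index v (enum (B x)).
have idx_lt x v : v \in B x -> idx x v < k.
  by move=> vin; apply: leq_trans (sz x); rewrite cardE index_mem mem_enum.
pose beta v := [set p : X * 'I_k | (v \in B p.1) && (val p.2 == idx p.1 v)].
have col x v (H : v \in B x) : (x, Ordinal (idx_lt x v H)) \in beta v.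
  by rewrite inE /= H eqxx.
have colu v p q : p \in beta v -> q \in beta v -> p.1 = q.1 -> p = q.
  case: p => [x i]; case: q => [y j] /=; rewrite !inE /=.
  move=> /andP[_ /eqP ei] /andP[_ /eqP ej] exy; subst y; congr pair.
  by apply: val_inj; rewrite /= ei ej.
have idx_inj x u v : u \in B x -> v \in B x -> idx x u = idx x v -> u = v.
  by move=> uin vin; apply: index_inj; rewrite ?mem_enum.
exists beta; split.
- move=> v; case: (vb v) => /set0Pn [x]; rewrite inE => xin _.
  by apply/set0Pn; exists (x, Ordinal (idx_lt x v xin)); exact: col.
- move=> v p q pin qin.
  have [_ cv] := vb v.
  have p1in : p.1 \in [set x | v \in B x].
    by move: pin; rewrite !inE => /andP[].
  have q1in : q.1 \in [set x | v \in B x].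
    by move: qin; rewrite !inE => /andP[].
  case/connectP: (cv _ _ p1in q1in) => s pth lst; clear p1in q1in.
  elim: s p pin pth lst => [|c s IH] p pin /=.
    by move=> _ e1; rewrite (colu v p q pin qin (esym e1)); exact: connect0.
  case/andP => r1 pth lst.
  have cin : v \in B c by move: r1; rewrite /restrict_rel /= => /and3P[_ _]; rewrite inE.
  have pc := col c v cin.
  apply: connect_trans (IH _ pc pth lst); apply: connect1.
  move: r1; rewrite /restrict_rel /lex_prod /= pin pc => /andP[-> _].
  by rewrite orbT.
- move=> u v nuv; rewrite -setI_eq0; apply/eqP/setP => p; rewrite !inE.
  apply/negP => /andP[/andP[uin /eqP eu] /andP[vin /eqP ev]].
  by move/eqP: nuv; apply; apply: (idx_inj p.1) => //; rewrite -eu -ev.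
- move=> u v euv; case: (eb u v euv) => x /andP[uin vin].
  exists (x, Ordinal (idx_lt x u uin)), (x, Ordinal (idx_lt x v vin)).
  rewrite !col /lex_prod /= eqxx /=; apply/orP; left.
  apply/negP => /eqP /(congr1 val) /= /(idx_inj x u v uin vin) E.
  by move: euv; rewrite E (snd Ge).
Qed.

Lemma restrict_sym (X : finType) (f : rel X) (S : {set X}) :
  symmetric f -> symmetric (restrict_rel f S).
Proof.
move=> fs x y; rewrite /restrict_rel /= fs.
by case: (f y x); case: (x \in S); case: (y \in S).
Qed.

Lemma dir1 (V : finType) (e : rel V) (Ge : simple_graph e) k :
  has_ltp e k -> has_td_bagsize e (2 * k).
Proof.
case=> X [f [tr [beta [bne bconn bdisj bedge]]]].
case: (tr) => [[fs fi] X0 cf fa].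
case/card_gt0P: X0 => r _.
have conn x : connect f r x.
  have := cf r x (in_setT r) (in_setT x).
  apply: (@connect_map _ _ _ f id) => a b.
  by rewrite /restrict_rel /= => /andP[fab _]; exact: connect1.
pose N x := [set y | (y == x) || (par f r x == Some y)].
pose B x := [set v | [exists p in beta v, p.1 \in N x]].
have inB v p x : p \in beta v -> p.1 \in N x -> v \in B x.
  by move=> pin pN; rewrite inE; apply/existsP; exists p; rewrite pin.
have NN x : x \in N x by rewrite inE eqxx.
exists X, f, B; split; first split => //.
- move=> v; split.
    case/set0Pn: (bne v) => p pin; apply/set0Pn; exists p.1.
    by rewrite inE; apply: (inB v p) => //.
  set S := [set x | v \in B x].
  have inS p : p \in beta v -> p.1 \in S.
    by move=> pin; rewrite inE; apply: (inB v p).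
  have h1 p q : p \in beta v -> q \in beta v ->
      connect (restrict_rel f S) p.1 q.1.
    move=> pin qin; have := bconn v p q pin qin.
    apply: (@connect_map _ _ _ _ fst) => a b.
    rewrite /restrict_rel /lex_prod /= => /and3P[/orP[/andP[/eqP -> _]|fab] ain bin].
      exact: connect0.
    by apply: connect1; rewrite /= fab !inS.
  have h2 x : x \in S -> exists2 p, p \in beta v & connect (restrict_rel f S) x p.1.
    move=> xS; move: (xS); rewrite /S !inE => /existsP [p /andP[pin]].
    rewrite inE => /orP[/eqP E|/eqP E]; exists p => //; first by rewrite E; exact: connect0.
    by apply: connect1; rewrite /restrict_rel /= (par_edge E) -/S xS inS.
  move=> x y xS yS.
  case: (h2 x xS) => p pin cxp; case: (h2 y yS) => q qin cyq.
  apply: connect_trans cxp _; apply: connect_trans (h1 p q pin qin) _.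
  by rewrite (sym_connect_sym (restrict_sym S fs)).
- move=> u v euv; case: (bedge u v euv) => p [q /and3P[pin qin]].
  rewrite /lex_prod /= => /orP[/andP[/eqP E _]|fpq].
    by exists p.1; rewrite (inB u p) //= (inB v q) // E.
  have conn' : forall x, connect f r x := conn.
  case: (edge_par fs fi fa conn' fpq) => E.
    exists p.1; rewrite (inB u p) //= (inB v q) //.
    by rewrite inE E eqxx orbT.
  exists q.1; rewrite (inB v q) // andbT (inB u p) //.
  by rewrite inE E eqxx orbT.
- move=> x.
  pose C := [set p : X * 'I_k | p.1 \in N x].
  pose hh v := [pick p in beta v :&: C].
  have hhS v : v \in B x -> exists2 p, hh v = Some p & p \in beta v :&: C.
    rewrite inE => /existsP [p0 /andP[p0in p0N]].
    rewrite /hh; case: pickP => [p pin | none]; first by exists p.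
    by move: (none p0); rewrite inE p0in inE p0N.
  have inj : {in B x &, injective hh}.
    move=> u v uin vin E; case: (hhS u uin) => p Ep pu; case: (hhS v vin) => q Eq qv.
    move: E; rewrite Ep Eq => -[E]; subst q.
    case: (eqVneq u v) => // nuv; exfalso.
    move: pu qv; rewrite !inE => /andP[pu _] /andP[pv _].
    by move: (disjointFr (bdisj u v nuv) pu); rewrite pv.
  rewrite -(card_in_imset inj).
  apply: (@leq_trans #|[set Some p | p in C]|).
    apply: subset_leq_card; apply/subsetP => o /imsetP [v vin ->].
    case: (hhS v vin) => p -> pin; apply/imsetP; exists p => //.
    by move: pin; rewrite inE => /andP[].
  rewrite card_imset; last by move=> a b [].
  have -> : C = setX (N x) [set: 'I_k].
    by apply/setP => -[a i]; rewrite !inE andbT.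
  rewrite cardsX cardsT card_ord leq_mul2r; apply/orP; right.
  case E: (par f r x) => [y|].
    apply: (@leq_trans #|[set x; y]|); last by rewrite cards2 ltnS leq_b1.
    apply: subset_leq_card; apply/subsetP => z; rewrite !inE E.
    by case/orP => [->|/eqP [->]]; rewrite ?eqxx ?orbT.
  apply: (@leq_trans #|[set x]|); last by rewrite cards1.
  apply: subset_leq_card; apply/subsetP => z; rewrite !inE E.
  by rewrite orbF.
Qed.

Lemma minP (P : nat -> Prop) n : P n -> exists m, P m /\ forall k, P k -> m <= k.
Proof.
elim/ltn_ind: n => n IH Pn.
case: (classic (exists k, k < n /\ P k)) => [[k [kn Pk]]|H]; first exact: IH kn Pk.
exists n; split => // k Pk; rewrite leqNgt; apply/negP => kn; apply: H; exists k.
by split.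
Qed.

Lemma triv (V : finType) (e : rel V) : has_td_bagsize e #|V|.
Proof.
exists unit, [rel _ _ : unit | false], (fun _ => [set: V]).
split; last by move=> _; rewrite cardsT.
split.
- split; first by split.
  + by apply/card_gt0P; exists tt.
  + by move=> [] [] _ _; exact: connect0.
  + move=> s us sz; exfalso; move/card_uniqP: us => us.
    have := max_card (mem s); rewrite us card_unit => H.
    by move: (leq_trans sz H).
- move=> v; split; first by apply/set0Pn; exists tt; rewrite inE in_setT.
  by move=> [] [] _ _; exact: connect0.
- by move=> u v _; exists tt; rewrite !in_setT.
Qed.

Theorem lemma12 (V : finType) (e : rel V) (Ge : simple_graph e) :
  exists (l : nat) (t : int),
    [/\ ltp_is e l, treewidth_is e t,
        (l%:Z - 1 <= t)%R & (t <= 2 * l%:Z - 1)%R].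
Proof.
have [k0 [Hk0 mink]] := minP (triv e).
have [l0 [Hl0 minl]] := minP (dir2 Ge Hk0).
exists l0, (k0%:Z - 1)%R; split.
- by split.
- by exists k0.
- have := minl _ (dir2 Ge Hk0); lia.
- have := mink _ (dir1 Ge Hl0); lia.
Qed.
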